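(* Assume $\lambda_1,\lambda_2>0$ and $\lambda_1\lambda_2<1$, with $\delta_0,\delta_1,\delta_2>0$ fixed, and let $(\theta_1^*,\theta_2^* )$ be the unique fixed point in $(0,\infty)^2$ of $(\theta_1,\theta_2)\mapsto(\varphi_1(\theta_2),\varphi_2(\theta_1))$ and \[ p_1^*=\frac{\delta_0\theta_2^*}{\delta_0\theta_1^*+\delta_0\theta_2^*+2\theta_1^*\theta_2^*},\qquad p_2^*=\frac{\delta_0\theta_1^*}{\delta_0\theta_1^*+\delta_0\theta_2^*+2\theta_1^*\theta_2^*}. \] Then \[ \lim_{\lambda_1\lambda_2\nearrow1}\theta_1^*=\lim_{\lambda_1\lambda_2\nearrow1}\theta_2^*=0\quad\text{and}\quad\lim_{\lambda_1\lambda_2\nearrow1}(p_1^*+p_2^* )=1. \]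
   Context: $\delta_0>0$ is the insurer's absolute risk aversion, $\delta_1,\delta_2>0$ the reinsurers', and $\lambda_1,\lambda_2>0$ the competition degrees. For $i\ne j$ in $\{1,2\}$ and $x>0$, \[ \varphi_i(x)=\frac{(\delta_0+2\delta_i)x^2+(1+\lambda_j)\delta_0\delta_i\,x}{2x^2+\big((1+2\lambda_j)\delta_0+2\lambda_j\delta_i\big)x+\lambda_j(1+\lambda_j)\delta_0\delta_i}. \] In the paper's two-layer reinsurance game, $(\theta_1^*,\theta_2^* )$ are the equilibrium variance-premium loadings of the two reinsurers and $(p_1^*,p_2^* )$ the insurer's equilibrium proportions ceded to them. *)

(* Defs.v *)
From Stdlib Require Import Reals.
Open Scope R_scope.

(* varphi_i(x) for reinsurer i (risk aversion di), with lj = lambda_j (j <> i),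
   d0 = delta_0 the insurer's risk aversion. *)
Definition phi (d0 di lj x : R) : R :=
  ((d0 + 2 * di) * x ^ 2 + (1 + lj) * d0 * di * x) /
  (2 * x ^ 2 + ((1 + 2 * lj) * d0 + 2 * lj * di) * x + lj * (1 + lj) * d0 * di).

Definition pstar1 (d0 t1 t2 : R) : R := d0 * t2 / (d0 * t1 + d0 * t2 + 2 * t1 * t2).
Definition pstar2 (d0 t1 t2 : R) : R := d0 * t1 / (d0 * t1 + d0 * t2 + 2 * t1 * t2).

(* Main.v *)
Require Import Defs.
From Stdlib Require Import Reals Lra Psatz.
Open Scope R_scope.

Lemma phi_eq (d0 di lj x y : R) : 0 < d0 -> 0 < di -> 0 < lj -> 0 < x ->
  y = phi d0 di lj x ->
  y * (2 * x ^ 2 + ((1 + 2 * lj) * d0 + 2 * lj * di) * x + lj * (1 + lj) * d0 * di)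
  = x * ((d0 + 2 * di) * x + (1 + lj) * d0 * di).
Proof.
  intros H0 Hi Hl Hx Hy. subst y. unfold phi.
  assert (0 < 2 * x ^ 2 + ((1 + 2 * lj) * d0 + 2 * lj * di) * x + lj * (1 + lj) * d0 * di).
  { assert (0 < lj * (1 + lj) * d0 * di) by (repeat apply Rmult_lt_0_compat; lra).
    assert (0 <= 2 * x^2) by nra.
    assert (0 < ((1 + 2 * lj) * d0 + 2 * lj * di) * x) by (apply Rmult_lt_0_compat; nra).
    lra. }
  field. lra.
Qed.

Theorem corollary3p5 (d0 d1 d2 : R) :
  0 < d0 -> 0 < d1 -> 0 < d2 ->
  forall eps : R, 0 < eps ->
  exists eta : R, 0 < eta /\
    forall l1 l2 t1 t2 : R,
      0 < l1 -> 0 < l2 -> 1 - eta < l1 * l2 -> l1 * l2 < 1 ->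
      0 < t1 -> 0 < t2 ->
      t1 = phi d0 d1 l2 t2 -> t2 = phi d0 d2 l1 t1 ->
      Rabs t1 < eps /\ Rabs t2 < eps /\
      Rabs (pstar1 d0 t1 t2 + pstar2 d0 t1 t2 - 1) < eps.
Proof.
  intros H0 H1 H2 eps He.
  set (M1 := (d0 + 2 * d1) / 2 + d1 + 1).
  set (M2 := (d0 + 2 * d2) / 2 + d2 + 1).
  assert (HM1 : 1 < M1) by (unfold M1; lra).
  assert (HM2 : 1 < M2) by (unfold M2; lra).
  set (eta := Rmin (1/2) (eps * d0 / (8 * (M1 + M2) * (d0 + 1)))).
  assert (Hq : 0 < eps * d0 / (8 * (M1 + M2) * (d0 + 1))).
  { apply Rdiv_lt_0_compat; [nra|]. nra. }
  assert (Heta1 : eta <= 1/2) by apply Rmin_l.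
  assert (Heta2 : eta <= eps * d0 / (8 * (M1 + M2) * (d0 + 1))) by apply Rmin_r.
  assert (Hetap : 0 < eta) by (unfold eta; apply Rmin_glb_lt; lra).
  exists eta; split; [exact Hetap|].
  intros l1 l2 t1 t2 Hl1 Hl2 HL HL1 Ht1 Ht2 E1 E2.
  pose proof (phi_eq d0 d1 l2 t2 t1 H0 H1 Hl2 Ht2 E1) as F1.
  pose proof (phi_eq d0 d2 l1 t1 t2 H0 H2 Hl1 Ht1 E2) as F2.
  set (A1 := (d0 + 2 * d1) * t2 + (1 + l2) * d0 * d1) in *.
  set (A2 := (d0 + 2 * d2) * t1 + (1 + l1) * d0 * d2) in *.
  set (c1 := 2 * t2 + d0 * (1 + l2)).
  set (c2 := 2 * t1 + d0 * (1 + l1)).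
  assert (ED1 : 2 * t2 ^ 2 + ((1 + 2 * l2) * d0 + 2 * l2 * d1) * t2 + l2 * (1 + l2) * d0 * d1
                = l2 * A1 + t2 * c1) by (unfold A1, c1; ring).
  assert (ED2 : 2 * t1 ^ 2 + ((1 + 2 * l1) * d0 + 2 * l1 * d2) * t1 + l1 * (1 + l1) * d0 * d2
                = l1 * A2 + t1 * c2) by (unfold A2, c2; ring).
  rewrite ED1 in F1. rewrite ED2 in F2.
  assert (HA1 : 0 < A1) by (unfold A1; assert (0 < (1+l2)*d0*d1) by (repeat apply Rmult_lt_0_compat; lra); assert (0 < (d0 + 2*d1)*t2) by (apply Rmult_lt_0_compat; lra); lra).
  assert (HA2 : 0 < A2) by (unfold A2; assert (0 < (1+l1)*d0*d2) by (repeat apply Rmult_lt_0_compat; lra); assert (0 < (d0 + 2*d2)*t1) by (apply Rmult_lt_0_compat; lra); lra).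
  assert (Hc1 : 0 < c1) by (unfold c1; nra).
  assert (Hc2 : 0 < c2) by (unfold c2; nra).
  assert (KD : (l2 * A1 + t2 * c1) * (l1 * A2 + t1 * c2) = A1 * A2).
  { assert (t1 * t2 * ((l2 * A1 + t2 * c1) * (l1 * A2 + t1 * c2)) = t1 * t2 * (A1 * A2)).
    { transitivity ((t1 * (l2 * A1 + t2 * c1)) * (t2 * (l1 * A2 + t1 * c2))) ; [ring|].
      rewrite F1, F2. ring. }
    apply Rmult_eq_reg_l with (t1 * t2); [exact H| nra]. }
  assert (K : (1 - l1 * l2) * A1 * A2 = l2 * A1 * t1 * c2 + l1 * A2 * t2 * c1 + t1 * t2 * c1 * c2)
    by nra.
  assert (P1 : l1 * t2 * c1 <= (1 - l1 * l2) * A1).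
  { assert (0 <= l2 * A1 * t1 * c2) by (repeat apply Rmult_le_pos; lra).
    assert (0 <= t1 * t2 * c1 * c2) by (repeat apply Rmult_le_pos; lra).
    apply Rmult_le_reg_r with A2; [exact HA2|]. nra. }
  assert (P2 : l2 * t1 * c2 <= (1 - l1 * l2) * A2).
  { assert (0 <= l1 * A2 * t2 * c1) by (repeat apply Rmult_le_pos; lra).
    assert (0 <= t1 * t2 * c1 * c2) by (repeat apply Rmult_le_pos; lra).
    apply Rmult_le_reg_r with A1; [exact HA1|]. nra. }
  assert (Q1 : l2 * t1 <= t2).
  { assert (t1 * (l2 * A1) <= t2 * A1) by (assert (0 <= t1 * (t2 * c1)) by nra; nra).
    apply Rmult_le_reg_r with A1; [exact HA1|]. nra. }
  assert (Q2 : l1 * t2 <= t1).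
  { assert (t2 * (l1 * A2) <= t1 * A2) by (assert (0 <= t2 * (t1 * c2)) by nra; nra).
    apply Rmult_le_reg_r with A2; [exact HA2|]. nra. }
  assert (R1 : A1 <= M1 * c1).
  { assert (M1 * c1 - A1 = (2*d1 + 2) * t2 + (1 + d0/2 + d1) * (d0 * (1 + l2))) by (unfold M1, c1, A1; field).
    assert (0 <= (2*d1 + 2) * t2) by (apply Rmult_le_pos; lra).
    assert (0 <= (1 + d0/2 + d1) * (d0 * (1 + l2))) by (apply Rmult_le_pos; [lra| apply Rmult_le_pos; lra]).
    lra. }
  assert (R2 : A2 <= M2 * c2).
  { assert (M2 * c2 - A2 = (2*d2 + 2) * t1 + (1 + d0/2 + d2) * (d0 * (1 + l1))) by (unfold M2, c2, A2; field).
    assert (0 <= (2*d2 + 2) * t1) by (apply Rmult_le_pos; lra).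
    assert (0 <= (1 + d0/2 + d2) * (d0 * (1 + l1))) by (apply Rmult_le_pos; [lra| apply Rmult_le_pos; lra]).
    lra. }
  assert (T1 : t1 < 2 * eta * M1).
  { assert (l1 * l2 * t1 <= l1 * t2) by nra.
    assert (t1 / 2 <= l1 * l2 * t1) by nra.
    assert (t1 * c1 / 2 <= l1 * t2 * c1) by (apply Rmult_le_compat_r with (r := c1) in H3; [|lra]; nra).
    assert ((1 - l1 * l2) * A1 <= eta * A1) by (apply Rmult_le_compat_r; lra).
    assert (eta * A1 <= eta * (M1 * c1)) by (apply Rmult_le_compat_l; lra).
    assert (t1 * c1 / 2 < eta * M1 * c1 * 2 / 2) by nra.
    apply Rmult_lt_reg_r with c1; [exact Hc1|]. nra. }
  assert (T2 : t2 < 2 * eta * M2).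
  { assert (l1 * l2 * t2 <= l2 * t1) by nra.
    assert (t2 / 2 <= l1 * l2 * t2) by nra.
    assert (t2 * c2 / 2 <= l2 * t1 * c2) by (apply Rmult_le_compat_r with (r := c2) in H3; [|lra]; nra).
    assert ((1 - l1 * l2) * A2 <= eta * A2) by (apply Rmult_le_compat_r; lra).
    assert (eta * A2 <= eta * (M2 * c2)) by (apply Rmult_le_compat_l; lra).
    assert (t2 * c2 / 2 < eta * M2 * c2 * 2 / 2) by nra.
    apply Rmult_lt_reg_r with c2; [exact Hc2|]. nra. }
  assert (Hb : 8 * (M1 + M2) * eta * (d0 + 1) <= eps * d0).
  { assert (HP : 0 < 8 * (M1 + M2) * (d0 + 1)) by nra.
    unfold Rdiv in Heta2.
    assert (HX : eta * (8 * (M1 + M2) * (d0 + 1)) <= eps * d0 * / (8 * (M1 + M2) * (d0 + 1)) * (8 * (M1 + M2) * (d0 + 1))) by (apply Rmult_le_compat_r; lra).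
    rewrite (Rmult_assoc (eps * d0)), Rinv_l, Rmult_1_r in HX by lra. nra. }
  assert (Te1 : t1 < eps) by nra.
  assert (Te2 : t2 < eps) by nra.
  assert (Te3 : 2 * t2 < eps * d0) by nra.
  split; [rewrite Rabs_pos_eq; lra|].
  split; [rewrite Rabs_pos_eq; lra|].
  unfold pstar1, pstar2.
  assert (HS : 0 < d0 * t1 + d0 * t2 + 2 * t1 * t2) by nra.
  replace (d0 * t2 / (d0 * t1 + d0 * t2 + 2 * t1 * t2) + d0 * t1 / (d0 * t1 + d0 * t2 + 2 * t1 * t2) - 1)
    with (- (2 * t1 * t2 / (d0 * t1 + d0 * t2 + 2 * t1 * t2))) by (field; lra).
  rewrite Rabs_Ropp, Rabs_pos_eq.
  2: { apply Rlt_le, Rdiv_lt_0_compat; nra. }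
  apply Rmult_lt_reg_r with (d0 * t1 + d0 * t2 + 2 * t1 * t2); [exact HS|].
  unfold Rdiv. rewrite Rmult_assoc, Rinv_l by lra.
  nra.
Qed.
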